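(* Let $k\mid n$. A set $\Pi$ of affine points of $\Sigma=\mathrm{PG}(2n,q)$ is the image under $\phi$ of the set of affine points of an $\mathbb{F}_{q^k}$-subplane of $\mathrm{PG}(2,q^n)$ secant to $l_\infty$ if and only if (i) $\Pi$ is a $2k$-dimensional affine subspace, and (ii) $\bar\Pi\cap H_\infty$ is a $(2k-1)$-dimensional subspace meeting exactly $q^k+1$ elements of $\mathcal D$, each in a $(k-1)$-dimensional subspace. Moreover, in that case $\bar\Pi\cap H_\infty$ meets each of these $q^k+1$ elements of $\mathcal D$ in an element of $\mathcal D_k$.
   Context: Let $q$ be a prime power and $n\ge1$. Points of $\mathrm{PG}(2,q^n)$ are written $(a,b,c)_{\mathbb{F}_{q^n}}$; $l_\infty$ is the line $c=0$; points off $l_\infty$ are affine. For $k\mid n$, an $\mathbb{F}_{q^k}$-subplane is a set $\{(su+tv+wz)_{\mathbb{F}_{q^n}}:(s,t,w)\in\mathbb{F}_{q^k}^3\setminus\{0\}\}$ for $\mathbb{F}_{q^n}$-independent $u,v,z\in\mathbb{F}_{q^n}^3$; it is secant to $l_\infty$ if it meets $l_\infty$ in $q^k+1$ points. Let $\Sigma=\mathrm{PG}(2n,q)$ be the projective space of the $\mathbb{F}_q$-vector space $\mathbb{F}_{q^n}\times\mathbb{F}_{q^n}\times\mathbb{F}_q$, points $(a,b,c)_{\mathbb{F}_q}$; $H_\infty$ is the hyperplane $c=0$, points off it are affine. An affine subspace is the set of affine points of a projective subspace not contained in $H_\infty$, with projective completion $\bar\Pi$. For $k\mid n$, $\mathcal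 D_k=\{\{(ax,bx,0)_{\mathbb{F}_q}:x\in\mathbb{F}_{q^k}^*\}:(a,b)\in\mathbb{F}_{q^n}^2\setminus\{(0,0)\}\}$, $\mathcal D=\mathcal D_n$. The ABB-map $\phi$ sends an affine point $(a,b,1)_{\mathbb{F}_{q^n}}$ to $(a,b,1)_{\mathbb{F}_q}$. *)

(* Defs.v *)
From HB Require Import structures.
From mathcomp Require Import all_boot all_order all_algebra all_field.
Set Implicit Arguments. Unset Strict Implicit. Unset Printing Implicit Defensive.
Import GRing.Theory.
Local Open Scope ring_scope.

(* F = F_q (q = #|F|), L = F_{q^n} as an F-extension (n = \dim {:L}).
   Sigma = PG(2n,q) is the projective space of the F-vector space
   SigV F L = L x L x F; projective subspaces = F-subspaces {vspace SigV F L}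
   (projective dimension d <-> vector dimension d+1). *)
Notation SigV F L := ((L * L) * (F^o))%type.

(* "P holds for exactly m elements" (for types that need not be finite). *)
Definition has_card (T : eqType) (P : T -> Prop) (m : nat) : Prop :=
  exists s : seq T, [/\ uniq s, size s = m & forall x, P x <-> x \in s].

(* U is the subspace (closure W) /\ H_inf, H_inf = {c = 0}. *)
Definition meet_Hinf (F : finFieldType) (L : fieldExtType F)
  (W U : {vspace SigV F L}) : Prop :=
  forall v : SigV F L, v \in U <-> (v \in W /\ v.2 = 0).

Definition not_in_Hinf (F : finFieldType) (L : fieldExtType F)
  (W : {vspace SigV F L}) : Prop :=
  exists2 v : SigV F L, v \in W & v.2 != 0.

(* The affine points of the projective subspace W, identified with the pairs
   (a,b) such that (a,b,1)_{F_q} lies in W. *)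
Definition aff_part (F : finFieldType) (L : fieldExtType F)
  (W : {vspace SigV F L}) (p : L * L) : Prop :=
  ((p.1, p.2), 1%R : F^o) \in W.

(* S is an element of D_k, where K = F_{q^k} (K = fullv gives D = D_n):
   S = {(a x, b x, 0) : x in K} (as an F-subspace; its nonzero vectors are the
   points of the element of the spread). *)
Definition Dk_elt (F : finFieldType) (L : fieldExtType F) (K : {vspace L})
  (S : {vspace SigV F L}) : Prop :=
  exists a b : L, (a, b) != (0, 0) /\
    forall v : SigV F L, v \in S <-> exists2 x : L, x \in K & v = ((a * x, b * x), 0).

Definition D_elt (F : finFieldType) (L : fieldExtType F) (S : {vspace SigV F L}) :=
  Dk_elt (fullv : {vspace L}) S.

(* PG(2,q^n): vectors in L^3 = 'rV[L]_3, points = 1-dim L-subspaces <[x]>.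
   The K-subplane spanned by u v z: points <[s u + t v + w z]>, (s,t,w) in K^3 \ 0. *)
Definition comb (L : fieldType) (u v z : 'rV[L]_3) (s t w : L) : 'rV[L]_3 :=
  s *: u + t *: v + w *: z.

(* the points of the subplane on l_inf (third coordinate 0) *)
Definition subplane_linf_pt (F : finFieldType) (L : fieldExtType F) (K : {vspace L})
  (u v z : 'rV[L]_3) (P : {vspace 'rV[L]_3}) : Prop :=
  exists s t w : L, [/\ s \in K, t \in K & w \in K] /\
    [/\ comb u v z s t w != 0, comb u v z s t w ord0 (inord 2) = 0
       & P = <[comb u v z s t w]>%VS].

Definition secant_subplane (F : finFieldType) (L : fieldExtType F) (K : {vspace L})
  (u v z : 'rV[L]_3) : Prop :=
  free [:: u; v; z] /\
  has_card (subplane_linf_pt K u v z) (#|F| ^ \dim K + 1)%N.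

(* The affine points (a,b,1)_{F_{q^n}} of the subplane, given by (a,b);
   phi maps them to (a,b,1)_{F_q}, also represented by (a,b). *)
Definition subplane_aff (F : finFieldType) (L : fieldExtType F) (K : {vspace L})
  (u v z : 'rV[L]_3) (p : L * L) : Prop :=
  exists s t w : L, [/\ s \in K, t \in K, w \in K,
    comb u v z s t w ord0 (inord 2) != 0
    & p = (comb u v z s t w ord0 (inord 0) / comb u v z s t w ord0 (inord 2),
           comb u v z s t w ord0 (inord 1) / comb u v z s t w ord0 (inord 2))].

Definition is_phi_subplane (F : finFieldType) (L : fieldExtType F) (K : {vspace L})
  (Pi : L * L -> Prop) : Prop :=
  exists u v z : 'rV[L]_3, secant_subplane K u v z /\
    forall p, Pi p <-> subplane_aff K u v z p.

Definition cond_ii (F : finFieldType) (L : fieldExtType F) (k : nat)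
  (U : {vspace SigV F L}) : Prop :=
  [/\ \dim U = (2 * k)%N,
      has_card (fun S => D_elt S /\ (U :&: S)%VS != 0%VS) (#|F| ^ k + 1)%N
    & forall S, D_elt S -> (U :&: S)%VS != 0%VS -> \dim (U :&: S) = k].

(* Main.v *)
Require Import Defs.
From HB Require Import structures.
From mathcomp Require Import all_boot all_order all_algebra all_field.
From mathcomp Require Import ring.
Set Implicit Arguments. Unset Strict Implicit. Unset Printing Implicit Defensive.
Import GRing.Theory.
Local Open Scope ring_scope.

Section S.
Variables (F : finFieldType) (L : fieldExtType F).

Definition gfun (w : L * L) (x : L) : SigV F L := ((x * w.1, x * w.2), 0).

Fact gfun_lin w : linear (gfun w).
Proof.
move=> a x y; rewrite /gfun /=.
rewrite !mulrDl -!scalerAl.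
change (((a *: (x*w.1) + y*w.1, a *: (x*w.2) + y*w.2), (0:F^o)) = ((a *: (x*w.1) + y*w.1, a *: (x*w.2) + y*w.2), a *: (0:F^o) + 0)).
by rewrite scaler0 addr0.
Qed.
HB.instance Definition _ w := GRing.isLinear.Build F L (SigV F L) *:%R (gfun w) (gfun_lin w).

Definition Sp (w : L * L) : {vspace SigV F L} := (linfun (gfun w) @: fullv)%VS.

Lemma enumK (K : {vspace L}) : exists s : seq L,
  [/\ uniq s, size s = (#|F| ^ \dim K)%N & forall x, x \in s = (x \in K)].
Proof.
have H := @card_vspace F (finvect_type L) _ K.
exists (enum (mem (K : {vspace finvect_type L}))).
split; first exact: enum_uniq.
 by rewrite -H cardE.
by move=> x; rewrite (mem_enum (mem (K : {vspace finvect_type L})) x).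
Qed.

Lemma count_PG1 (K : {subfield L}) (T : eqType) (f : L -> L -> T)
 (hf : forall s t s' t', s \in K -> t \in K -> s' \in K -> t' \in K ->
    (s,t) != (0,0) -> (s',t') != (0,0) -> (f s t = f s' t' <-> s * t' = t * s')) :
 has_card (fun x => exists s t, [/\ s \in K, t \in K, (s,t) != (0,0) & x = f s t])
   (#|F| ^ \dim K + 1)%N.
Proof.
have [e [ue se me]] := enumK K.
have nz1 t : (1, t) != (0, 0) :> L * L by rewrite xpair_eqE oner_eq0.
have nz01 : (0, 1) != (0, 0) :> L * L by rewrite xpair_eqE oner_eq0 andbF.
exists ([seq f 1 t | t <- e] ++ [:: f 0 1]); split.
- rewrite cat_uniq /= orbF andbT; apply/andP; split.
    rewrite map_inj_in_uniq // => t t' /[!me] tK t'K.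
    by move/(iffLR (hf _ _ _ _ (mem1v _) tK (mem1v _) t'K (nz1 _) (nz1 _))); rewrite mulr1 mul1r.
  apply/negP => /mapP [t]; rewrite me => tK.
  move/(iffLR (hf _ _ _ _ (mem0v _) (mem1v _) (mem1v _) tK nz01 (nz1 t))).
  by rewrite mul0r mulr1 => /eqP; rewrite eq_sym oner_eq0.
- by rewrite size_cat size_map se.
move=> x; split.
  move=> [s [t [sK tK nz ->]]]; rewrite mem_cat; apply/orP.
  have [s0|s0] := eqVneq s 0.
    right; rewrite inE; apply/eqP; apply/hf => //; rewrite ?mem0v ?mem1v //.
    by rewrite s0 !mul0r mulr0.
  left; apply/mapP; exists (t / s); first by rewrite me rpred_div.
  apply/hf => //; rewrite ?mem1v ?rpred_div //.
  by rewrite mulr1 mulrC divfK.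
rewrite mem_cat => /orP [/mapP [t]|]; rewrite ?me; [move=> tK ->|].
  by exists 1, t; split => //; apply: mem1v.
rewrite inE => /eqP ->; exists 0, 1; split => //; [exact: mem0v | exact: mem1v].
Qed.

Notation G w := (linfun (gfun w)).

Lemma GE w x : G w x = gfun w x. Proof. by rewrite lfunE. Qed.

Lemma addSig (x1 x2 y1 y2 : L) (c d : F^o) :
  (((x1,x2), c) + ((y1,y2), d) : SigV F L) = ((x1+y1, x2+y2), c + d).
Proof. by []. Qed.

Lemma gfun0 w : gfun w 0 = 0.
Proof. exact: raddf0. Qed.

Lemma gfun_eq w x y : w != 0 -> gfun w x = gfun w y -> x = y.
Proof.
case: w => w1 w2; rewrite xpair_eqE negb_and /gfun /= => nz [] e1 e2.
by case/orP: nz => nz; [apply: (mulIf nz) | apply: (mulIf nz)].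
Qed.

Lemma dim_G w (V : {vspace L}) : w != 0 -> \dim (G w @: V) = \dim V.
Proof.
move=> nz; apply: limg_dim_eq; apply/eqP; rewrite -subv0; apply/subvP => x.
rewrite memv_cap memv_ker => /andP[_ /eqP]; rewrite GE -(gfun0 w) => h.
by rewrite memv0; apply/eqP; apply: gfun_eq h.
Qed.

Lemma memSp v w : v \in Sp w <-> exists x, v = gfun w x.
Proof.
split; first by move/memv_imgP => [x _ ->]; exists x; rewrite GE.
by move=> [x ->]; rewrite -GE; apply: memv_img; apply: memvf.
Qed.

Lemma D_eltP S : D_elt S <-> exists2 w, w != 0 & S = Sp w.
Proof.
split.
  move=> [a [b [nz h]]]; exists (a,b) => //; apply/vspaceP => v.
  apply/idP/idP.
    move/h => [x _ ->]; apply/memSp; exists x; by rewrite /gfun /= !(mulrC x).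
  move/memSp => [x ->]; apply/h; exists x; rewrite ?memvf //.
  by rewrite /gfun /= !(mulrC x).
move=> [w nz ->]; exists w.1, w.2; split; first by case: w nz.
move=> v; rewrite memSp; split => [[x ->]|[x _ ->]]; exists x; rewrite ?memvf //.
  by rewrite /gfun !(mulrC x).
by rewrite /gfun !(mulrC x).
Qed.

Definition cross (w w' : L * L) := w.1 * w'.2 - w.2 * w'.1.

Lemma prop_of_cross w w' : w != 0 -> cross w w' = 0 ->
  exists c, w' = (c * w.1, c * w.2).
Proof.
case: w => w1 w2; case: w' => v1 v2; rewrite /cross /= => nz /eqP.
rewrite subr_eq0 => /eqP e.
have [w10|w10] := eqVneq w1 0.
  have w20 : w2 != 0 by move: nz; rewrite w10 xpair_eqE eqxx.
  exists (v2 / w2); congr (_,_); last by field.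
  move: e; rewrite w10 mul0r => /esym /eqP; rewrite mulf_eq0 (negbTE w20) /=.
  by move/eqP ->; rewrite mulr0.
exists (v1 / w1); congr (_,_); first by field.
apply: (mulfI w10); rewrite e; field => //.
Qed.

Lemma gfun_scale w c y : gfun (c * w.1, c * w.2) y = gfun w (y * c).
Proof. by rewrite /gfun /= !mulrA. Qed.

Lemma Sp_eq w w' : w != 0 -> w' != 0 -> (Sp w = Sp w' <-> cross w w' = 0).
Proof.
move=> nz nz'; split.
  move=> e; have : gfun w 1 \in Sp w' by rewrite -e; apply/memSp; exists 1.
  move/memSp => [x]; rewrite /gfun /cross !mul1r => -[] -> ->.
  by rewrite -!mulrA (mulrC w'.1) subrr.
move=> /(prop_of_cross nz) [c ew'].
have c0 : c != 0 by move: nz'; rewrite ew'; apply: contraNneq => ->; rewrite !mul0r.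
apply/vspaceP => v.
apply/idP/idP.
  move/memSp => [x ->]; apply/memSp; exists (x / c).
  by rewrite ew' gfun_scale divfK.
move/memSp => [x ->]; apply/memSp; exists (x * c); by rewrite ew' gfun_scale.
Qed.


Lemma has_card_ext (T : eqType) (P Q : T -> Prop) m :
  (forall x, P x <-> Q x) -> has_card Q m -> has_card P m.
Proof. by move=> h [s [u sz hs]]; exists s; split => // x; rewrite h. Qed.

Section USec.
Variables (K : {subfield L}) (a b : L * L).
Hypothesis hab : cross a b != 0.

Definition comb2 s t : L * L := (s * a.1 + t * b.1, s * a.2 + t * b.2).

Lemma a_nz : a != 0.
Proof. by apply: contraNneq hab => ->; rewrite /cross /= !mul0r subrr. Qed.
Lemma b_nz : b != 0.
Proof. by apply: contraNneq hab => ->; rewrite /cross /= !mulr0 subrr. Qed.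

Lemma gfun_comb2 s t x : gfun (comb2 s t) x = gfun a (x * s) + gfun b (x * t).
Proof. by rewrite /gfun addSig addr0 /= !mulrDr !mulrA. Qed.

Lemma gfun_add2 s t : gfun a s + gfun b t = ((s * a.1 + t * b.1, s * a.2 + t * b.2), 0).
Proof. by rewrite /gfun addSig addr0. Qed.

Lemma indep x y x' y' :
  gfun a x + gfun b y = gfun a x' + gfun b y' -> x = x' /\ y = y'.
Proof.
rewrite !gfun_add2 => -[] e1 e2.
have E1 : (x - x') * a.1 + (y - y') * b.1 = 0.
  by apply/eqP; rewrite !mulrBl addrACA -opprD subr_eq0 e1.
have E2 : (x - x') * a.2 + (y - y') * b.2 = 0.
  by apply/eqP; rewrite !mulrBl addrACA -opprD subr_eq0 e2.
have D1 : (x - x') * cross a b = b.2 * ((x - x') * a.1 + (y - y') * b.1)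
   - b.1 * ((x - x') * a.2 + (y - y') * b.2) by rewrite /cross; ring.
have D2 : (y - y') * cross a b = a.1 * ((x - x') * a.2 + (y - y') * b.2)
   - a.2 * ((x - x') * a.1 + (y - y') * b.1) by rewrite /cross; ring.
move: D1 D2; rewrite E1 E2 !mulr0 subrr => /eqP + /eqP.
rewrite !mulf_eq0 (negbTE hab) !orbF !subr_eq0 => /eqP -> /eqP ->; done.
Qed.

Lemma cross_comb2 s t s' t' :
  cross (comb2 s t) (comb2 s' t') = (s * t' - t * s') * cross a b.
Proof. rewrite /cross /comb2 /=; ring. Qed.

Lemma comb2_nz s t : (s,t) != (0,0) -> comb2 s t != 0.
Proof.
move=> nz; apply/negP => /eqP e.
have h1 := cross_comb2 s t 1 0; have h2 := cross_comb2 s t 0 1.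
rewrite e /cross /= !mul0r subrr in h1 h2.
move/esym/eqP: h1; rewrite mulf_eq0 (negbTE hab) orbF mulr0 mulr1 sub0r oppr_eq0.
move/esym/eqP: h2; rewrite mulf_eq0 (negbTE hab) orbF mulr0 mulr1 subr0.
by move=> /eqP s0 /eqP t0; move: nz; rewrite s0 t0 eqxx.
Qed.

Variable U : {vspace SigV F L}.
Hypothesis hU : forall v, v \in U <->
  exists s t, [/\ s \in K, t \in K & v = gfun a s + gfun b t].

Lemma U_meet S : D_elt S -> (U :&: S)%VS != 0%VS ->
  exists s t, [/\ s \in K, t \in K, (s,t) != (0,0) & S = Sp (comb2 s t)].
Proof.
move=> /D_eltP [w nz ->] ne.
have := memv_pick (U :&: Sp w)%VS; rewrite memv_cap => /andP [/hU [s [t [sK tK ev]]]].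
move/memSp => [x ex].
have vnz : vpick (U :&: Sp w)%VS != 0 by rewrite vpick0.
have st0 : (s,t) != (0,0).
  apply: contraNneq vnz => -[s0 t0]; by rewrite ev s0 t0 !gfun0 addr0.
exists s, t; split => //; symmetry; apply/Sp_eq => //; first exact: comb2_nz.
move: ev; rewrite ex -(mul1r s) -(mul1r t) -gfun_comb2 /gfun !mul1r => -[] e1 e2.
by rewrite /cross /comb2 /= -e1 -e2 -!mulrA (mulrC w.1) subrr.
Qed.

Lemma U_cap s t : s \in K -> t \in K -> (s,t) != (0,0) ->
  (U :&: Sp (comb2 s t))%VS = (G (comb2 s t) @: K)%VS.
Proof.
move=> sK tK nz; apply/vspaceP => v; apply/idP/idP.
  rewrite memv_cap => /andP [/hU [s' [t' [s'K t'K ->]]] /memSp [l]].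
  rewrite gfun_comb2 => /indep [e1 e2].
  have lK : l \in K.
    have [s0|s0] := eqVneq s 0.
      have t0 : t != 0 by move: nz; rewrite s0 xpair_eqE eqxx.
      have -> : l = t' / t by rewrite e2 mulfK.
      by rewrite rpred_div.
    have -> : l = s' / s by rewrite e1 mulfK.
    by rewrite rpred_div.
  apply/memv_imgP; exists l => //; by rewrite GE gfun_comb2 e1 e2.
move/memv_imgP => [l lK ->]; rewrite memv_cap; apply/andP; split.
  by apply/hU; exists (l * s), (l * t); split; rewrite ?rpredM // GE gfun_comb2.
by apply/memSp; exists l; rewrite GE.
Qed.

Lemma U_Dk S : D_elt S -> (U :&: S)%VS != 0%VS -> Dk_elt K (U :&: S)%VS.
Proof.
move=> hS ne; have [s [t [sK tK nz eS]]] := U_meet hS ne.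
rewrite eS U_cap //; exists (comb2 s t).1, (comb2 s t).2; split.
  by have := comb2_nz nz; case: (comb2 s t).
move=> v; split.
  by move/memv_imgP => [x xK ->]; exists x; rewrite // GE /gfun !(mulrC x).
by move=> [x xK ->]; apply/memv_imgP; exists x; rewrite // GE /gfun !(mulrC x).
Qed.

Lemma U_dimS S : D_elt S -> (U :&: S)%VS != 0%VS -> \dim (U :&: S) = \dim K.
Proof.
move=> hS ne; have [s [t [sK tK nz eS]]] := U_meet hS ne.
by rewrite eS U_cap // dim_G // comb2_nz.
Qed.

Lemma U_count : has_card (fun S => D_elt S /\ (U :&: S)%VS != 0%VS) (#|F| ^ \dim K + 1)%N.
Proof.
apply: (has_card_ext (Q := fun x => exists s t,
   [/\ s \in K, t \in K, (s,t) != (0,0) & x = Sp (comb2 s t)])); last first.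
  apply: count_PG1 => s t s' t' sK tK s'K t'K nz nz'.
  rewrite Sp_eq ?comb2_nz // cross_comb2.
  split; first by move/eqP; rewrite mulf_eq0 (negbTE hab) orbF subr_eq0 => /eqP.
  by move=> ->; rewrite subrr mul0r.
move=> S; split; first by move=> [hS ne]; apply: U_meet.
move=> [s [t [sK tK nz ->]]]; split.
  by apply/D_eltP; exists (comb2 s t) => //; apply: comb2_nz.
rewrite U_cap // -dimv_eq0 dim_G ?comb2_nz //.
by rewrite -lt0n adim_gt0.
Qed.

Lemma U_dim : \dim U = (2 * \dim K)%N.
Proof.
have -> : U = (G a @: K + G b @: K)%VS.
  apply/vspaceP => v; apply/idP/idP.
    move/hU => [s [t [sK tK ->]]]; apply/memv_addP.
    exists (G a s); first exact: memv_img.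
    by exists (G b t); rewrite ?memv_img // !GE.
  move/memv_addP => [u /memv_imgP [s sK ->] [u' /memv_imgP [t tK ->] ->]].
  by apply/hU; exists s, t; rewrite !GE.
rewrite dimv_disjoint_sum ?dim_G ?a_nz ?b_nz ?mul2n ?addnn //.
apply/eqP; rewrite -subv0; apply/subvP => v; rewrite memv_cap memv0.
move=> /andP [/memv_imgP [x _ ->] /memv_imgP [y _]]; rewrite !GE => e.
have : gfun a x + gfun b 0 = gfun a 0 + gfun b y by rewrite e !gfun0 addr0 add0r.
by move/indep => [-> _]; rewrite gfun0.
Qed.

End USec.

Definition mfun (c : L) (x : L) : L := x * c.
Fact mfun_lin c : linear (mfun c).
Proof. by move=> r x y; rewrite /mfun mulrDl scalerAl. Qed.
HB.instance Definition _ c := GRing.isLinear.Build F L L *:%R (mfun c) (mfun_lin c).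

Lemma ME c x : linfun (mfun c) x = x * c. Proof. by rewrite lfunE. Qed.

Lemma dim_M c (V : {vspace L}) : c != 0 -> \dim (linfun (mfun c) @: V) = \dim V.
Proof.
move=> nz; apply: limg_dim_eq; apply/eqP; rewrite -subv0; apply/subvP => x.
rewrite memv_cap memv_ker => /andP[_ /eqP]; rewrite ME memv0 => /eqP.
by rewrite mulf_eq0 (negbTE nz) orbF.
Qed.

Lemma subfield_eq (K : {subfield L}) (V : {vspace L}) :
  1 \in V -> {in V &, forall x y, x * y \in V} -> \dim V = \dim K -> V = K.
Proof.
move=> V1 Vmul dVK.
have isa : is_aspace V.
  by rewrite /is_aspace has_algid1 //=; apply/prodvP => x y xV yV; apply: Vmul.
pose E : {subfield L} := ASpace isa.
have sVK : (V <= K)%VS.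
  apply/subvP => x xV.
  have := Fermat's_little_theorem K x; have := Fermat's_little_theorem E x.
  by rewrite /= xV /= dVK => <- ->.
by apply/eqP; rewrite eqEdim sVK dVK leqnn.
Qed.

Lemma dim_preim (U : {vspace SigV F L}) w : w != 0 ->
  \dim (G w @^-1: U) = \dim (U :&: Sp w).
Proof.
move=> nz; have -> : (U :&: Sp w)%VS = (G w @: (G w @^-1: U))%VS.
  apply/vspaceP => v; apply/idP/idP.
    rewrite memv_cap => /andP [vU /memSp [x ev]]; apply/memv_imgP; exists x.
      by rewrite -memv_preim GE -ev.
    by rewrite GE.
  move/memv_imgP => [x]; rewrite -memv_preim => xU ->.
  by rewrite memv_cap xU; apply/memSp; exists x; rewrite GE.
by rewrite dim_G.
Qed.

Section Key.
Variables (K : {subfield L}) (U : {vspace SigV F L}).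
Hypothesis hdim : forall S, D_elt S -> (U :&: S)%VS != 0%VS -> \dim (U :&: S) = \dim K.

Lemma Qlem w1 w2 (V1 V2 : {vspace L}) : cross w1 w2 != 0 ->
  (forall v, v \in U <-> exists x y, [/\ x \in V1, y \in V2 & v = gfun w1 x + gfun w2 y]) ->
  \dim V1 = \dim K ->
  forall x y, x \in V1 -> x != 0 -> y \in V2 -> y != 0 ->
  forall x', x' \in V1 -> x' * y / x \in V2.
Proof.
move=> hc hdec dV1 x y xV x0 yV y0.
set c := comb2 w1 w2 x y.
have cnz : c != 0 by apply: comb2_nz => //; rewrite xpair_eqE negb_and x0.
have uU : gfun c 1 \in U by apply/hdec; exists x, y; rewrite gfun_comb2 !mul1r.
have ne : (U :&: Sp c)%VS != 0%VS.
  apply/negP => /eqP e; have : gfun c 1 \in (U :&: Sp c)%VS.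
    by rewrite memv_cap uU; apply/memSp; exists 1.
  by rewrite e memv0 -(gfun0 c) => /eqP /(gfun_eq cnz) /eqP; rewrite oner_eq0.
have dVu : \dim (G c @^-1: U) = \dim K.
  by rewrite dim_preim // hdim //; apply/D_eltP; exists c.
have sub : (linfun (mfun x) @: (G c @^-1: U) <= V1)%VS.
  apply/subvP => v /memv_imgP [l]; rewrite -memv_preim GE gfun_comb2.
  move=> /hdec [x1 [y1 [x1V y1V /(indep hc) [e1 e2]]]] ->.
  by rewrite ME e1.
have eq : (linfun (mfun x) @: (G c @^-1: U))%VS = V1.
  by apply/eqP; rewrite eqEdim sub dim_M // dVu dV1 leqnn.
move=> x'; rewrite -eq => /memv_imgP [l lU ->]; rewrite ME.
move: lU; rewrite -memv_preim GE gfun_comb2.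
move=> /hdec [x1 [y1 [x1V y1V /(indep hc) [e1 e2]]]].
have -> : l * x * y / x = l * y by field.
by rewrite e2.
Qed.

Lemma key : \dim U = (2 * \dim K)%N ->
  has_card (fun S => D_elt S /\ (U :&: S)%VS != 0%VS) (#|F| ^ \dim K + 1)%N ->
  exists a b, cross a b != 0 /\
    forall v, v \in U <-> exists s t, [/\ s \in K, t \in K & v = gfun a s + gfun b t].
Proof.
move=> dU [l [ul sl hl]].
have : (1 < size l)%N by rewrite sl addn1 ltnS expn_gt0 ltnW // finNzRing_gt1.
case: l ul hl {sl} => [|S1 [|S2 l']] //= /andP [nS12 _] hl _.
have [h1 n1] : D_elt S1 /\ (U :&: S1)%VS != 0%VS by apply/hl; rewrite inE eqxx.
have [h2 n2] : D_elt S2 /\ (U :&: S2)%VS != 0%VS by apply/hl; rewrite !inE eqxx orbT.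
have d1 := hdim h1 n1; have d2 := hdim h2 n2.
move: (h1) (h2) => /D_eltP [w1 w1nz eS1] /D_eltP [w2 w2nz eS2].
have hc : cross w1 w2 != 0.
  apply/negP => /eqP /(Sp_eq w1nz w2nz) e; move: nS12.
  by rewrite -eS1 -eS2 in e; rewrite e inE eqxx.
set V1 := (G w1 @^-1: U)%VS; set V2 := (G w2 @^-1: U)%VS.
have dV1 : \dim V1 = \dim K by rewrite dim_preim // -eS1.
have dV2 : \dim V2 = \dim K by rewrite dim_preim // -eS2.
have eT : (U :&: S1 + U :&: S2)%VS = U.
  apply/eqP; rewrite eqEdim subv_add !capvSl /= dimv_disjoint_sum ?d1 ?d2 ?dU ?mul2n ?addnn //.
  apply/eqP; rewrite -subv0; apply/subvP => v; rewrite !memv_cap memv0 eS1 eS2.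
  move=> /andP [/andP [_ /memSp [x ex]] /andP [_ /memSp [y ey]]].
  have : gfun w1 x + gfun w2 0 = gfun w1 0 + gfun w2 y by rewrite -ex -ey !gfun0 addr0 add0r.
  by move/(indep hc) => [x0 _]; rewrite ex x0 gfun0.
have hdec : forall v, v \in U <->
    exists x y, [/\ x \in V1, y \in V2 & v = gfun w1 x + gfun w2 y].
  move=> v; split.
    rewrite -{1}eT => /memv_addP [u1 + [u2 + ->]].
    rewrite !memv_cap eS1 eS2 => /andP [u1U /memSp [x ex]] /andP [u2U /memSp [y ey]].
    exists x, y; split; rewrite ?ex ?ey //; by rewrite -memv_preim GE -?ex -?ey.
  move=> [x [y [xV yV ->]]]; rewrite -!memv_preim !GE in xV yV.
  exact: rpredD.
have hdec' : forall v, v \in U <->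
    exists x y, [/\ x \in V2, y \in V1 & v = gfun w2 x + gfun w1 y].
  move=> v; rewrite hdec; split => -[x [y [xV yV ->]]]; exists y, x; split => //; exact: addrC.
have hc' : cross w2 w1 != 0.
  have -> : cross w2 w1 = - cross w1 w2 by rewrite /cross; ring.
  by rewrite oppr_eq0.
have Q1 := Qlem hc hdec dV1; have Q2 := Qlem hc' hdec' dV2.
have V1nz : V1 != 0%VS by rewrite -dimv_eq0 dV1 -lt0n adim_gt0.
have V2nz : V2 != 0%VS by rewrite -dimv_eq0 dV2 -lt0n adim_gt0.
set x0 := vpick V1; set y0 := vpick V2.
have x0V : x0 \in V1 := memv_pick V1; have y0V : y0 \in V2 := memv_pick V2.
have x0nz : x0 != 0 by rewrite vpick0.
have y0nz : y0 != 0 by rewrite vpick0.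
set Vn := (linfun (mfun x0^-1) @: V1)%VS.
have Vn_mem z : (z \in Vn) = (z * x0 \in V1).
  apply/idP/idP.
    by move/memv_imgP => [x xV ->]; rewrite ME divfK.
  move=> h; apply/memv_imgP; exists (z * x0) => //; by rewrite ME mulfK.
have eVn : Vn = K.
  apply: subfield_eq.
  - by rewrite Vn_mem mul1r.
  - move=> z z' /[!Vn_mem] zV z'V.
    have [zx0|zx0] := eqVneq (z * x0) 0.
      have -> : z = 0 by move: zx0 => /eqP; rewrite mulf_eq0 (negbTE x0nz) orbF => /eqP.
      by rewrite !mul0r mem0v.
    have h := Q2 _ _ y0V y0nz zV zx0 _ (Q1 _ _ x0V x0nz y0V y0nz _ z'V).
    suff -> : z * z' * x0 = z' * x0 * y0 / x0 * (z * x0) / y0 by [].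
    by field; rewrite x0nz y0nz.
  - by rewrite dim_M ?invr_eq0 // dV1.
have V1K x : (x \in V1) = (x / x0 \in K).
  by rewrite -eVn Vn_mem divfK.
have V2K y : (y \in V2) = (y / y0 \in K).
  apply/idP/idP.
    move=> yV; have := Q2 _ _ y0V y0nz x0V x0nz _ yV.
    rewrite V1K; suff -> : y * x0 / y0 / x0 = y / y0 by [].
    by field; rewrite x0nz y0nz.
  move=> h; have hx : y / y0 * x0 \in V1 by rewrite V1K mulfK.
  have := Q1 _ _ x0V x0nz y0V y0nz _ hx.
  suff -> : y / y0 * x0 * y0 / x0 = y by [].
  by field; rewrite x0nz y0nz.
exists (x0 * w1.1, x0 * w1.2), (y0 * w2.1, y0 * w2.2); split.
  move: hc; rewrite /cross /=.
  have -> : x0 * w1.1 * (y0 * w2.2) - x0 * w1.2 * (y0 * w2.1) =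
            (x0 * y0) * (w1.1 * w2.2 - w1.2 * w2.1) by ring.
  by rewrite mulf_eq0 negb_or mulf_eq0 negb_or x0nz y0nz.
move=> v; rewrite hdec; split.
  move=> [x [y [xV yV ->]]]; exists (x / x0), (y / y0); split; rewrite -?V1K -?V2K //.
  by rewrite !gfun_scale !divfK.
move=> [s [t [sK tK ->]]]; exists (s * x0), (t * y0); split.
- by rewrite V1K mulfK.
- by rewrite V2K mulfK.
- by rewrite !gfun_scale.
Qed.
End Key.
Definition crd (x : 'rV[L]_3) (j : nat) : L := x ord0 (inord j).

Lemma row3_eq (x y : 'rV[L]_3) : crd x 0 = crd y 0 -> crd x 1 = crd y 1 ->
  crd x 2 = crd y 2 -> x = y.
Proof.
move=> h0 h1 h2; apply/rowP => i.
have -> : i = inord (val i) by rewrite inord_val.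
case: i => [[|[|[|n]]] Hi] //=.
Qed.

Lemma crd_comb (u v z : 'rV[L]_3) s t w j :
  crd (comb u v z s t w) j = s * crd u j + t * crd v j + w * crd z j.
Proof. by rewrite /crd /comb !mxE. Qed.

Lemma crdZ (x : 'rV[L]_3) c j : crd (c *: x) j = c * crd x j.
Proof. by rewrite /crd mxE. Qed.

Definition mkrow (x y w : L) : 'rV[L]_3 := \row_(i < 3) nth 0 [:: x; y; w] i.

Lemma crd_mk0 x y w : crd (mkrow x y w) 0 = x. Proof. by rewrite /crd mxE inordK. Qed.
Lemma crd_mk1 x y w : crd (mkrow x y w) 1 = y. Proof. by rewrite /crd mxE inordK. Qed.
Lemma crd_mk2 x y w : crd (mkrow x y w) 2 = w. Proof. by rewrite /crd mxE inordK. Qed.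


Definition c12 (x : 'rV[L]_3) : L * L := (crd x 0, crd x 1).

Lemma line_scale (x : 'rV[L]_3) c : c != 0 -> <[c *: x]>%VS = <[x]>%VS.
Proof.
move=> c0; apply/vspaceP => v; apply/idP/idP => /vlineP [k ->]; apply/vlineP.
  by exists (k * c); rewrite scalerA.
by exists (k / c); rewrite scalerA divfK.
Qed.

Lemma line_eq (x y : 'rV[L]_3) : x != 0 -> y != 0 -> crd x 2 = 0 -> crd y 2 = 0 ->
  (<[x]>%VS = <[y]>%VS <-> cross (c12 x) (c12 y) = 0).
Proof.
move=> x0 y0 x2 y2; split.
  move=> e; have : x \in <[y]>%VS by rewrite -e memv_line.
  move/vlineP => [c ->]; rewrite /cross /c12 /= !crdZ.
  ring.
have x12 : c12 x != 0.
  apply: contraNneq x0; rewrite /c12 => -[e0 e1].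
  by apply/eqP; apply: row3_eq; rewrite ?e0 ?e1 ?x2 /crd mxE.
move/(prop_of_cross x12) => [c [e0 e1]].
have ey : y = c *: x by apply: row3_eq; rewrite crdZ ?e0 ?e1 ?x2 ?y2 ?mulr0.
have c0 : c != 0 by apply: contraNneq y0 => c0; rewrite ey c0 scale0r.
by rewrite ey line_scale.
Qed.

Definition affp (p0 a b : L * L) (s t : L) : L * L :=
  (p0.1 + (s * a.1 + t * b.1), p0.2 + (s * a.2 + t * b.2)).

Section SSec.
Variables (K : {subfield L}) (a b p0 : L * L).
Hypothesis hab : cross a b != 0.
Let u := mkrow a.1 a.2 0.
Let v := mkrow b.1 b.2 0.
Let z := mkrow p0.1 p0.2 1.

Lemma S_free : free [:: u; v; z].
Proof.
rewrite free_cons (free_cons v) seq1_free span_cons !span_seq1.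
apply/and3P; split.
- apply/negP => /memv_addP [x /vlineP [al ->] [y /vlineP [be ->] e]].
  have e2 : crd u 2 = crd (al *: v + be *: z) 2 by rewrite e.
  rewrite crd_mk2 /crd mxE -/(crd _ 2) -/(crd _ 2) !crdZ crd_mk2 crd_mk2 mulr0 add0r mulr1 in e2.
  move: e; rewrite -e2 scale0r addr0 => e.
  move/negP: hab; apply; apply/eqP.
  have e0 : crd u 0 = crd (al *: v) 0 by rewrite e.
  have e1 : crd u 1 = crd (al *: v) 1 by rewrite e.
  rewrite !crdZ !crd_mk0 !crd_mk1 in e0 e1.
  by rewrite /cross e0 e1; ring.
- apply/negP => /vlineP [be e].
  have e2 : crd v 2 = crd (be *: z) 2 by rewrite e.
  rewrite crdZ !crd_mk2 mulr1 in e2.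
  move: e; rewrite -e2 scale0r => e.
  move/negP: (b_nz hab); apply; apply/eqP.
  have e0 : crd v 0 = 0 by rewrite e /crd mxE.
  have e1 : crd v 1 = 0 by rewrite e /crd mxE.
  by rewrite crd_mk0 in e0; rewrite crd_mk1 in e1; case: (b) e0 e1 => ? ? /= -> ->.
- apply/negP => /eqP e.
  have : crd z 2 = 0 by rewrite e /crd mxE.
  by rewrite crd_mk2 => /eqP; rewrite oner_eq0.
Qed.

Lemma crd_uvz s t w :
  [/\ crd (comb u v z s t w) 0 = s * a.1 + t * b.1 + w * p0.1,
      crd (comb u v z s t w) 1 = s * a.2 + t * b.2 + w * p0.2 &
      crd (comb u v z s t w) 2 = w].
Proof.
rewrite !crd_comb !crd_mk0 !crd_mk1 !crd_mk2; split => //.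
by rewrite !mulr0 !add0r mulr1.
Qed.

Lemma S_aff p : subplane_aff K u v z p <-> exists s t, [/\ s \in K, t \in K & p = affp p0 a b s t].
Proof.
split.
  move=> [s [t [w [sK tK wK]]]]; rewrite -/(crd _ 2) -/(crd _ 0) -/(crd _ 1).
  have [-> -> ->] := crd_uvz s t w => w0 ->.
  exists (s / w), (t / w); split; rewrite ?rpred_div //.
  by rewrite /affp; congr (_,_); field.
move=> [s [t [sK tK ->]]]; exists s, t, 1; rewrite -/(crd _ 2) -/(crd _ 0) -/(crd _ 1).
have [-> -> ->] := crd_uvz s t 1.
split; rewrite ?mem1v ?oner_eq0 //.
by rewrite /affp !divr1 !mul1r; congr (_,_); rewrite addrC.
Qed.

Lemma S_secant : secant_subplane K u v z.
Proof.
split; first exact: S_free.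
have crd_nz s t : (s,t) != (0,0) -> comb u v z s t 0 != 0.
  move=> nz; have := comb2_nz hab nz; apply: contraNneq => e.
  have [e0 e1 _] := crd_uvz s t 0.
  apply/eqP; move: e0 e1; rewrite e /crd !mxE !mul0r !addr0 /comb2 => <- <-; done.
apply: (has_card_ext (Q := fun x => exists s t,
   [/\ s \in K, t \in K, (s,t) != (0,0) & x = <[comb u v z s t 0]>%VS])); last first.
  apply: count_PG1 => s t s' t' sK tK s'K t'K nz nz'.
  rewrite line_eq ?crd_nz //; last by have [_ _ ->] := crd_uvz s' t' 0.
    2: by have [_ _ ->] := crd_uvz s t 0.
  have -> : c12 (comb u v z s t 0) = comb2 a b s t.
    by have [e0 e1 _] := crd_uvz s t 0; rewrite /c12 e0 e1 !mul0r !addr0.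
  have -> : c12 (comb u v z s' t' 0) = comb2 a b s' t'.
    by have [e0 e1 _] := crd_uvz s' t' 0; rewrite /c12 e0 e1 !mul0r !addr0.
  rewrite cross_comb2.
  split; first by move/eqP; rewrite mulf_eq0 (negbTE hab) orbF subr_eq0 => /eqP.
  by move=> ->; rewrite subrr mul0r.
move=> P; split.
  move=> [s [t [w [[sK tK wK] [nz]]]]]; rewrite -/(crd _ 2).
  have [_ _ ->] := crd_uvz s t w => w0; rewrite w0 => -> .
  exists s, t; split => //; apply: contraNneq nz => -[-> ->].
  by rewrite /comb w0 !scale0r !add0r.
move=> [s [t [sK tK nz ->]]]; exists s, t, 0; split; first by rewrite mem0v.
split; [exact: crd_nz | | by []].
by rewrite -/(crd _ 2); have [_ _ ->] := crd_uvz s t 0.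
Qed.
End SSec.
Lemma comb_swap12 (u v z : 'rV[L]_3) s t w : comb u v z s t w = comb u z v s w t.
Proof. by rewrite /comb addrAC. Qed.
Lemma comb_swap13 (u v z : 'rV[L]_3) s t w : comb u v z s t w = comb z v u w t s.
Proof. by rewrite /comb addrC (addrC (s *: u)) addrA. Qed.

Lemma aff_swap12 K (u v z : 'rV[L]_3) p : subplane_aff K u v z p -> subplane_aff K u z v p.
Proof. by move=> [s [t [w [sK tK wK]]]]; rewrite comb_swap12 => h1 h2; exists s, w, t. Qed.
Lemma aff_swap13 K (u v z : 'rV[L]_3) p : subplane_aff K u v z p -> subplane_aff K z v u p.
Proof. by move=> [s [t [w [sK tK wK]]]]; rewrite comb_swap13 => h1 h2; exists w, t, s. Qed.

Lemma free_third (u v z : 'rV[L]_3) : free [:: u; v; z] ->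
  ~ [/\ crd u 2 = 0, crd v 2 = 0 & crd z 2 = 0].
Proof.
rewrite free_cons (free_cons v) seq1_free span_cons !span_seq1 => /and3P [nu nv nz] [u2 v2 z2].
have v0 : v != 0 by apply: contraNneq nv => ->; rewrite mem0v.
have d0 : crd v 0 * crd z 1 - crd v 1 * crd z 0 != 0.
  apply/negP => /eqP d0; move/negP: nv; apply.
  by rewrite -(iffRL (line_eq v0 nz v2 z2) d0) memv_line.
move/negP: nu; apply; apply/memv_addP.
set d := crd v 0 * crd z 1 - crd v 1 * crd z 0 in d0.
exists (((crd u 0 * crd z 1 - crd u 1 * crd z 0) / d) *: v); first by rewrite memvZ ?memv_line.
exists (((crd v 0 * crd u 1 - crd v 1 * crd u 0) / d) *: z); first by rewrite memvZ ?memv_line.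
apply: row3_eq; rewrite /crd !mxE -!/(crd _ _).
- by rewrite /d; field; rewrite -/d.
- by rewrite /d; field; rewrite -/d.
- by rewrite u2 v2 z2 !mulr0 addr0.
Qed.

Lemma lin_decomp (uj vj zj s t w s1 t1 w1 s2 t2 w2 m1 m2 m0 : L) :
  s = m1 * s1 + m2 * s2 -> t = m1 * t1 + m2 * t2 -> w = m1 * w1 + m2 * w2 + m0 ->
  s * uj + t * vj + w * zj =
    m1 * (s1 * uj + t1 * vj + w1 * zj) + m2 * (s2 * uj + t2 * vj + w2 * zj) + m0 * zj.
Proof. by move=> -> -> ->; ring. Qed.

Section FSec.
Variables (K : {subfield L}) (u v z : 'rV[L]_3).

Lemma F_core s1 t1 w1 s2 t2 w2 :
  crd z 2 != 0 -> [/\ s1 \in K, t1 \in K & w1 \in K] -> [/\ s2 \in K, t2 \in K & w2 \in K] ->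
  comb u v z s1 t1 w1 != 0 -> comb u v z s2 t2 w2 != 0 ->
  crd (comb u v z s1 t1 w1) 2 = 0 -> crd (comb u v z s2 t2 w2) 2 = 0 ->
  <[comb u v z s1 t1 w1]>%VS != <[comb u v z s2 t2 w2]>%VS ->
  exists a b p0, cross a b != 0 /\ forall p, subplane_aff K u v z p <->
     exists s t, [/\ s \in K, t \in K & p = affp p0 a b s t].
Proof.
move=> Z0 [s1K t1K w1K] [s2K t2K w2K] A0 B0 A2 B2 nAB.
set A := comb u v z s1 t1 w1 in A0 A2 nAB; set B := comb u v z s2 t2 w2 in B0 B2 nAB.
set Z := crd z 2 in Z0.
have hAB : crd A 0 * crd B 1 - crd A 1 * crd B 0 != 0.
  by apply/negP => /eqP e; move/negP: nAB; apply; apply/eqP; apply/line_eq.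
set U1 := Z * crd u 0 - crd u 2 * crd z 0; set U2 := Z * crd u 1 - crd u 2 * crd z 1.
set V1 := Z * crd v 0 - crd v 2 * crd z 0; set V2 := Z * crd v 1 - crd v 2 * crd z 1.
have hA0 : Z * crd A 0 = s1 * U1 + t1 * V1.
  have : Z * crd A 0 = s1 * U1 + t1 * V1 + crd z 0 * crd A 2.
    by rewrite /A !crd_comb /U1 /V1 /Z; ring.
  by rewrite A2 mulr0 addr0.
have hA1 : Z * crd A 1 = s1 * U2 + t1 * V2.
  have : Z * crd A 1 = s1 * U2 + t1 * V2 + crd z 1 * crd A 2.
    by rewrite /A !crd_comb /U2 /V2 /Z; ring.
  by rewrite A2 mulr0 addr0.
have hB0 : Z * crd B 0 = s2 * U1 + t2 * V1.
  have : Z * crd B 0 = s2 * U1 + t2 * V1 + crd z 0 * crd B 2.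
    by rewrite /B !crd_comb /U1 /V1 /Z; ring.
  by rewrite B2 mulr0 addr0.
have hB1 : Z * crd B 1 = s2 * U2 + t2 * V2.
  have : Z * crd B 1 = s2 * U2 + t2 * V2 + crd z 1 * crd B 2.
    by rewrite /B !crd_comb /U2 /V2 /Z; ring.
  by rewrite B2 mulr0 addr0.
have hd : s1 * t2 - t1 * s2 != 0.
  apply/negP => /eqP d0.
  have E : (Z * crd A 0) * (Z * crd B 1) - (Z * crd A 1) * (Z * crd B 0) =
           (s1 * t2 - t1 * s2) * (U1 * V2 - U2 * V1).
    by rewrite hA0 hA1 hB0 hB1; ring.
  have E2 : (Z * crd A 0) * (Z * crd B 1) - (Z * crd A 1) * (Z * crd B 0) =
           (Z * Z) * (crd A 0 * crd B 1 - crd A 1 * crd B 0) by ring.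
  move: E; rewrite E2 d0 mul0r => /eqP.
  by rewrite !mulf_eq0 (negbTE Z0) (negbTE hAB).
set d := s1 * t2 - t1 * s2 in hd.
exists (crd A 0 / Z, crd A 1 / Z), (crd B 0 / Z, crd B 1 / Z), (crd z 0 / Z, crd z 1 / Z).
split.
  rewrite /cross /=.
  have -> : crd A 0 / Z * (crd B 1 / Z) - crd A 1 / Z * (crd B 0 / Z) =
      (crd A 0 * crd B 1 - crd A 1 * crd B 0) / (Z * Z) by field.
  by rewrite mulf_eq0 negb_or hAB invr_eq0 mulf_eq0 negb_or Z0.
move=> p; split.
  move=> [s [t [w [sK tK wK]]]]; rewrite -/(crd _ 2) -/(crd _ 0) -/(crd _ 1).
  pose m1 := (s * t2 - t * s2) / d; pose m2 := (s1 * t - t1 * s) / d.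
  pose m0 := w - m1 * w1 - m2 * w2.
  have hs : s = m1 * s1 + m2 * s2 by rewrite /m1 /m2 /d; field; exact: hd.
  have ht : t = m1 * t1 + m2 * t2 by rewrite /m1 /m2 /d; field; exact: hd.
  have hw : w = m1 * w1 + m2 * w2 + m0 by rewrite /m0; ring.
  have key j : crd (comb u v z s t w) j = m1 * crd A j + m2 * crd B j + m0 * crd z j.
    by rewrite /A /B !crd_comb (lin_decomp _ _ _ hs ht hw).
  have m1K : m1 \in K by rewrite rpred_div ?rpredB ?rpredM.
  have m2K : m2 \in K by rewrite rpred_div ?rpredB ?rpredM.
  have m0K : m0 \in K.
    rewrite /m0; apply: rpredB; first apply: rpredB; try apply: rpredM; done.
  rewrite !key A2 B2 !mulr0 !add0r => m0Z ->.
  have m00 : m0 != 0 by apply: contraNneq m0Z => ->; rewrite mul0r.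
  exists (m1 / m0), (m2 / m0); split; [exact: rpred_div | exact: rpred_div |].
  by rewrite /affp /= -/Z; congr (_,_); field; rewrite Z0 m00.
move=> [s [t [sK tK ->]]].
exists (s * s1 + t * s2), (s * t1 + t * t2), (s * w1 + t * w2 + 1).
rewrite -/(crd _ 2) -/(crd _ 0) -/(crd _ 1).
have key j : crd (comb u v z (s * s1 + t * s2) (s * t1 + t * t2) (s * w1 + t * w2 + 1)) j
     = s * crd A j + t * crd B j + 1 * crd z j.
  by rewrite /A /B !crd_comb (lin_decomp _ _ _ (erefl _) (erefl _) (erefl _)).
rewrite !key A2 B2 !mulr0 !add0r mul1r; split; rewrite ?rpredD ?rpredM ?mem1v //.
by rewrite /affp /= -/Z; congr (_,_); field; rewrite Z0.
Qed.
End FSec.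
Lemma F_main (K : {subfield L}) (u v z : 'rV[L]_3) : secant_subplane K u v z ->
  exists a b p0, cross a b != 0 /\ forall p, subplane_aff K u v z p <->
     exists s t, [/\ s \in K, t \in K & p = affp p0 a b s t].
Proof.
move=> [fr [l [ul sl hl]]].
have : (1 < size l)%N by rewrite sl addn1 ltnS expn_gt0 ltnW // finNzRing_gt1.
case: l ul hl {sl} => [|S1 [|S2 l']] //= /andP [nS12 _] hl _.
have := iffRL (hl S1) (mem_head _ _); move=> [s1 [t1 [w1 [K1 [n1 c1 e1]]]]].
have S2in : S2 \in [:: S1, S2 & l'] by rewrite !inE eqxx orbT.
have := iffRL (hl S2) S2in; move=> [s2 [t2 [w2 [K2 [n2 c2 e2]]]]].
have nAB : <[comb u v z s1 t1 w1]>%VS != <[comb u v z s2 t2 w2]>%VS.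
  by rewrite -e1 -e2; apply: contraNneq nS12 => ->; rewrite inE eqxx.
have [z2|z2] := eqVneq (crd z 2) 0; last exact: (F_core z2 K1 K2 n1 n2 c1 c2 nAB).
have [v2|v2] := eqVneq (crd v 2) 0.
  have [u2|u2] := eqVneq (crd u 2) 0; first by case: (free_third fr).
  case: K1 K2 => [s1K t1K w1K] [s2K t2K w2K].
  rewrite !(comb_swap13 u v z) in n1 n2 c1 c2 nAB.
  have [a [b [p0 [hab hp]]]] := F_core u2 (And3 w1K t1K s1K) (And3 w2K t2K s2K) n1 n2 c1 c2 nAB.
  exists a, b, p0; split => // p; rewrite -hp; split; exact: aff_swap13.
case: K1 K2 => [s1K t1K w1K] [s2K t2K w2K].
rewrite !(comb_swap12 u v z) in n1 n2 c1 c2 nAB.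
have [a [b [p0 [hab hp]]]] := F_core v2 (And3 s1K w1K t1K) (And3 s2K w2K t2K) n1 n2 c1 c2 nAB.
exists a, b, p0; split => // p; rewrite -hp; split; exact: aff_swap12.
Qed.

Lemma subSig (x1 x2 y1 y2 : L) (c d : F^o) :
  (((x1,x2), c) - ((y1,y2), d) : SigV F L) = ((x1-y1, x2-y2), c - d).
Proof. by []. Qed.

Lemma aff_shift (W U : {vspace SigV F L}) (p1 : L * L) : meet_Hinf W U -> aff_part W p1 ->
  forall p, aff_part W p <-> (((p.1 - p1.1, p.2 - p1.2), 0) : SigV F L) \in U.
Proof.
move=> mW h1 p; split.
  move=> h; apply/mW; split => //.
  by have := rpredB h h1; rewrite subSig subrr.
move=> /mW [hW _]; rewrite /aff_part.
have -> : (((p.1, p.2), 1) : SigV F L) = ((p.1 - p1.1, p.2 - p1.2), 0) + ((p1.1, p1.2), 1).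
  by rewrite addSig !subrK add0r.
exact: rpredD.
Qed.

Lemma exists_aff (W : {vspace SigV F L}) : not_in_Hinf W -> exists p1, aff_part W p1.
Proof.
move=> [[[x y] c] wW /= c0]; exists (c^-1 *: x, c^-1 *: y); rewrite /aff_part /=.
have -> : (((c^-1 *: x, c^-1 *: y), 1) : SigV F L) = c^-1 *: ((x, y), c).
  by rewrite -[1 in LHS](mulVf c0).
exact: memvZ.
Qed.

Lemma aff_char (K : {vspace L}) (W U : {vspace SigV F L}) (p1 a b : L * L) : meet_Hinf W U -> aff_part W p1 ->
  (forall v, v \in U <-> exists s t, [/\ s \in K, t \in K & v = gfun a s + gfun b t]) ->
  forall p, aff_part W p <-> exists s t, [/\ s \in K, t \in K & p = affp p1 a b s t].
Proof.
move=> mW h1 hU p; rewrite (aff_shift mW h1) hU; split.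
  move=> [s [t [sK tK]]]; rewrite gfun_add2 => -[e1 e2]; exists s, t; split => //.
  by rewrite /affp -e1 -e2 !(addrC p1.1, addrC p1.2) !subrK; case: p {e1 e2}.
move=> [s [t [sK tK ->]]]; exists s, t; split => //; rewrite gfun_add2 /affp /=.
by rewrite !(addrC p1.1, addrC p1.2) !addrK.
Qed.

Lemma U0_mem K (a b : L * L) : forall v, v \in (G a @: K + G b @: K)%VS <->
  exists s t, [/\ s \in K, t \in K & v = gfun a s + gfun b t].
Proof.
move=> v; split.
  move/memv_addP => [u /memv_imgP [s sK ->] [u' /memv_imgP [t tK ->] ->]].
  by exists s, t; rewrite !GE.
move=> [s [t [sK tK ->]]]; apply/memv_addP.
exists (G a s); first exact: memv_img.
by exists (G b t); rewrite ?memv_img // !GE.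
Qed.

Lemma W0_props (K : {subfield L}) (a b p0 : L * L) : cross a b != 0 ->
  exists W U : {vspace SigV F L}, [/\ \dim W = (2 * \dim K).+1, not_in_Hinf W,
    (forall p, aff_part W p <-> exists s t, [/\ s \in K, t \in K & p = affp p0 a b s t]),
    meet_Hinf W U & cond_ii (\dim K) U].
Proof.
move=> hab; set U0 := (G a @: K + G b @: K)%VS.
have hU0 := U0_mem K a b.
have U02 x : x \in U0 -> x.2 = 0.
  by move/hU0 => [s [t [_ _ ->]]]; rewrite gfun_add2.
set e : SigV F L := ((p0.1, p0.2), 1).
have e2 : e.2 != 0 by rewrite oner_eq0.
have enz : e != 0 by apply: contraNneq e2 => ->.
set W0 := (U0 + <[e]>)%VS.
have eW : e \in W0 by apply: (subvP (addvSr _ _)); apply: memv_line.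
have mW : meet_Hinf W0 U0.
  move=> v; split.
    by move=> vU; split; [apply: (subvP (addvSl _ _)) | apply: U02].
  move=> [/memv_addP [x xU [y /vlineP [c ->] ->]]].
  have -> : (x + c *: e).2 = x.2 + c * 1 by [].
  by rewrite U02 // add0r mulr1 => ->; rewrite scale0r addr0.
exists W0, U0; split => //.
- rewrite dimv_disjoint_sum ?dim_vline ?enz ?(U_dim hab hU0) ?addn1 //.
  apply/eqP; rewrite -subv0; apply/subvP => x; rewrite memv_cap memv0.
  move=> /andP [/U02 x2 /vlineP [c ex]]; move: x2; rewrite ex.
  have -> : (c *: e).2 = c * 1 by [].
  by rewrite mulr1 => ->; rewrite scale0r.
- by exists e.
- exact: (aff_char mW eW hU0).
- split; [exact: (U_dim hab hU0) | exact: (U_count hab hU0) | exact: (U_dimS hab hU0)].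
Qed.
End S.

Unset Implicit Arguments.

Theorem theorem3p1 (F : finFieldType) (L : fieldExtType F) (K : {subfield L})
  (Pi : L * L -> Prop) :
  (is_phi_subplane K Pi <->
   exists W U : {vspace SigV F L},
     [/\ \dim W = (2 * \dim K).+1, not_in_Hinf W,
         (forall p, Pi p <-> aff_part W p),
         meet_Hinf W U & cond_ii (\dim K) U])
  /\
  (is_phi_subplane K Pi ->
   forall W U : {vspace SigV F L},
     not_in_Hinf W -> (forall p, Pi p <-> aff_part W p) -> meet_Hinf W U ->
     forall S, D_elt S -> (U :&: S)%VS != 0%VS -> Dk_elt K (U :&: S)%VS).
Proof.
split; first split.
- move=> [u [v [z [sec hPi]]]].
  have [a [b [p0 [hab hp]]]] := F_main sec.
  have [W [U [dW nW hW mW cU]]] := W0_props K p0 hab.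
  exists W, U; split => // p; rewrite hPi hp hW; done.
- move=> [W [U [dW nW hW mW [dU cU hdim]]]].
  have [a [b [hab hU]]] := key hdim dU cU.
  have [p1 hp1] := exists_aff nW.
  have hA := aff_char mW hp1 hU.
  exists (mkrow a.1 a.2 0), (mkrow b.1 b.2 0), (mkrow p1.1 p1.2 1); split.
    exact: S_secant.
  by move=> p; rewrite hW hA S_aff.
move=> [u [v [z [sec hPi]]]] W U nW hW mW S hS ne.
have [a [b [p0 [hab hp]]]] := F_main sec.
have [p1 hp1] := exists_aff nW.
have sh := aff_shift mW hp1.
have [s1 [t1 [s1K t1K ep1]]] : exists s t, [/\ s \in K, t \in K & p1 = affp p0 a b s t].
  by apply/hp/hPi/hW.
apply: (U_Dk hab _ hS ne) => w; split.
  move=> wU; have w2 : w.2 = 0 by have [] := iffLR (mW w) wU.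
  case: w wU w2 => [[c1 c2] c3] wU /= c30; rewrite c30 in wU.
  set p := (p1.1 + c1, p1.2 + c2).
  have : aff_part W p.
    by apply/sh; rewrite /p /= !(addrC p1.1, addrC p1.2) !addrK.
  move/hW/hPi/hp => [s [t [sK tK ep]]].
  exists (s - s1), (t - t1); split; rewrite ?rpredB //.
  rewrite gfun_add2.
  have -> : c1 = p.1 - p1.1 by rewrite /p /= (addrC p1.1) addrK.
  have -> : c2 = p.2 - p1.2 by rewrite /p /= (addrC p1.2) addrK.
  rewrite ep ep1 /affp /= c30; congr ((_,_),_); ring.
move=> [s [t [sK tK ->]]].
set p := affp p0 a b (s1 + s) (t1 + t).
have : aff_part W p by apply/hW/hPi/hp; exists (s1 + s), (t1 + t); rewrite ?rpredD.
move/sh; congr (_ \in U); rewrite gfun_add2 /p ep1 /affp /=; congr ((_,_),_); ring.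
Qed.
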